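(* Let $H$ be a graph and $G=L(H)$. Then $G$ is localizable if and only if $H$ contains an independent set $S$ of strong vertices and a set $\mathcal{T}$ of strong triangles of $H$ that decomposes the graph $H-S$ (i.e., each triangle in $\mathcal{T}$ is a subgraph of $H-S$ and each edge of $H-S$ lies in exactly one triangle of $\mathcal{T}$).
   Context: $L(H)$ is the line graph of $H$. A clique is strong if it intersects every maximal independent set; a graph is localizable if its vertex set admits a partition into strong cliques. A vertex $v$ of $H$ is strong if every maximal matching of $H$ covers $v$. A triangle $T$ of $H$ is strong if every maximal matching of $H$ contains an edge of $T$. *)

(* Defs.v *)
(* Finite simple graphs as symmetric irreflexive relations. *)
From mathcomp Require Import all_boot.
Set Implicit Arguments. Unset Strict Implicit. Unset Printing Implicit Defensive.

Section Graphs.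
Variable T : finType.
Variable e : rel T.

Definition independent (S : {set T}) : bool :=
  [forall x in S, forall y in S, ~~ e x y].

Definition maximal_independent (S : {set T}) : bool :=
  maxset independent S.

Definition clique (C : {set T}) : bool :=
  [forall x in C, forall y in C, (x != y) ==> e x y].

Definition strong_clique (C : {set T}) : Prop :=
  clique C /\ forall S, maximal_independent S -> exists2 x, x \in C & x \in S.

Definition localizable : Prop :=
  exists P : {set {set T}}, partition P [set: T] /\
    forall C, C \in P -> strong_clique C.
End Graphs.

Section LineGraph.
Variable V : finType.
Variable adj : rel V.

Definition is_edge (E : {set V}) : bool :=
  [exists x, exists y, adj x y && (E == [set x; y])].

End LineGraph.

(* vertex type of the line graph L(H): the edges of H *)
Notation edge_of adj := {E : {set _} | is_edge adj E}.

Definition line_rel (V : finType) (adj : rel V) : rel (edge_of adj) :=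
  fun E F => (E != F) && (val E :&: val F != set0).

Section Matchings.
Variable V : finType.
Variable adj : rel V.

Definition matching (M : {set edge_of adj}) : bool :=
  [forall E in M, forall F in M, (E != F) ==> (val E :&: val F == set0)].

Definition maximal_matching (M : {set edge_of adj}) : bool :=
  maxset matching M.

Definition strong_vertex (v : V) : Prop :=
  forall M, maximal_matching M -> exists2 E, E \in M & v \in val E.

Definition triangle (Tr : {set V}) : bool :=
  (#|Tr| == 3) && clique adj Tr.

Definition strong_triangle (Tr : {set V}) : Prop :=
  forall M, maximal_matching M -> exists2 E, E \in M & val E \subset Tr.
End Matchings.

Arguments line_rel {V} adj.
Arguments matching {V} adj M.
Arguments maximal_matching {V} adj M.
Arguments strong_vertex {V} adj v.
Arguments triangle {V} adj Tr.
Arguments strong_triangle {V} adj Tr.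
Arguments independent {T} e S.
Arguments clique {T} e C.
Arguments is_edge {V} adj E.
Arguments localizable {T} e.

(* Main.v *)
Require Import Defs.
From mathcomp Require Import all_boot.
Set Implicit Arguments. Unset Strict Implicit. Unset Printing Implicit Defensive.

Section Aux.
Variable V : finType.
Variable adj : rel V.
Hypothesis adj_sym : symmetric adj.
Hypothesis adj_irr : irreflexive adj.



Lemma edge_pair (g : edge_of adj) : exists x y, adj x y /\ val g = [set x; y].
Proof.
case: g => A /= /existsP [x /existsP [y /andP [h /eqP ->]]]; by exists x, y.
Qed.

Lemma edge_at (g : edge_of adj) v : v \in val g -> exists w, adj v w /\ val g = [set v; w].
Proof.
have [x [y [hxy ->]]] := edge_pair g.
rewrite !inE => /orP [] /eqP ->; first by exists y.
by exists x; rewrite adj_sym setUC.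
Qed.

Lemma adj_neq x y : adj x y -> x != y.
Proof. by apply: contraTneq => ->; rewrite adj_irr. Qed.

Lemma two_el (p q x y : V) : x != y -> x \in [set p; q] -> y \in [set p; q] ->
  [set p; q] = [set x; y].
Proof.
move=> nxy hx hy; apply/eqP; rewrite eq_sym eqEcard subUset !sub1set hx hy /= !cards2 nxy.
by case: (p != q).
Qed.

Lemma edge_eq (g h : edge_of adj) x y : x != y -> x \in val g -> y \in val g ->
  x \in val h -> y \in val h -> g = h.
Proof.
move=> nxy hxg hyg hxh hyh; apply: val_inj.
have [p [q [_ eg]]] := edge_pair g; have [p' [q' [_ eh]]] := edge_pair h.
rewrite eg in hxg hyg *; rewrite eh in hxh hyh *.
by rewrite (two_el nxy hxg hyg) (two_el nxy hxh hyh).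
Qed.

Lemma adj_in (g : edge_of adj) u v : u != v -> u \in val g -> v \in val g -> adj u v.
Proof.
move=> nuv hu hv; have [w [huw eg]] := edge_at hu.
by move: hv; rewrite eg !inE eq_sym (negbTE nuv) /= => /eqP ->.
Qed.

Lemma mk_edge x y : adj x y -> is_edge adj [set x; y].
Proof. by move=> h; apply/existsP; exists x; apply/existsP; exists y; rewrite h eqxx. Qed.

Definition mkE x y (h : adj x y) : edge_of adj := exist (fun E : {set V} => is_edge adj E) [set x; y] (mk_edge h).

Lemma indep_match : independent (line_rel adj) =1 matching adj.
Proof.
move=> M; rewrite /independent /matching; apply: eq_forallb => x /=.
case: (x \in M) => //=; apply: eq_forallb => y /=; case: (y \in M) => //=.
rewrite /line_rel; by case: (x != y); case: (_ :&: _ == set0).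
Qed.

Lemma maxind_eq M : maximal_independent (line_rel adj) M = maximal_matching adj M.
Proof. exact: maxset_eq indep_match. Qed.

Lemma clique_meet (C : {set edge_of adj}) g h : clique (line_rel adj) C ->
  g \in C -> h \in C -> g != h -> exists z, z \in val g /\ z \in val h.
Proof.
move=> /forallP /(_ g) /implyP /(_ _) /forallP /(_ h) /implyP cl gC hC ngh.
have := cl gC hC; rewrite ngh /line_rel /= => /andP [_ /set0Pn [z]].
by rewrite inE => /andP [] ? ?; exists z.
Qed.

Lemma keyL (C : {set edge_of adj}) (f : edge_of adj) : strong_clique (line_rel adj) C ->
  f \notin C -> (forall g, g \in C -> exists z, z \in val g /\ z \in val f) -> False.
Proof.
move=> [_ st] fC hm.
have mf : matching adj [set f].
  by apply/forallP => a; apply/implyP; rewrite inE => /eqP ->;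
     apply/forallP => b; apply/implyP; rewrite inE => /eqP ->; rewrite eqxx.
have [M maxM sM] := maxset_exists mf.
have [g gC gM] := st M (etrans (maxind_eq M) maxM).
have fM : f \in M by rewrite (subsetP sM) ?inE.
have ngf : g != f by apply: contraNneq fC => <-.
have [z [zg zf]] := hm g gC.
have /maxsetp := maxM => /forallP /(_ g) /implyP /(_ gM).
move=> /forallP /(_ f) /implyP /(_ fM); rewrite ngf /= => /eqP e0.
by have := in_set0 z; rewrite -e0 inE zg zf.
Qed.

Lemma tri_pair Tr x : triangle adj Tr -> x \in Tr ->
  exists y z, [/\ y \in Tr, z \in Tr, y != z, y != x & z != x].
Proof.
move=> /andP [/eqP c3 _] xT.
have h2 : #|Tr :\ x| = 2 by have := cardsD1 x Tr; rewrite xT c3 add1n => -[].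
have : 1 < #|Tr :\ x| by rewrite h2.
move=> /card_gt1P [y [z [hy hz nyz]]]; move: hy hz; rewrite !in_setD1.
by move=> /andP [? ?] /andP [? ?]; exists y, z.
Qed.

Lemma tri_adj Tr y z : triangle adj Tr -> y \in Tr -> z \in Tr -> y != z -> adj y z.
Proof.
move=> /andP [_ /forallP /(_ y) /implyP cl] yT zT nyz.
by have /forallP /(_ z) /implyP /(_ zT) /implyP := cl yT; apply.
Qed.

Lemma in3 (a b c x : V) : x \in [set a; b; c] -> [\/ x = a, x = b | x = c].
Proof. by rewrite !inE => /orP [/orP [] | ] /eqP ->; [constructor 1|constructor 2|constructor 3]. Qed.

Ltac try_key key g0 g1 g2 e0 e1 e2 :=
  first [ solve [apply: (key g0); rewrite ?e0 ?e1 ?e2 ?inE ?eqxx ?orbT //]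
        | solve [apply: (key g1); rewrite ?e0 ?e1 ?e2 ?inE ?eqxx ?orbT //]
        | solve [apply: (key g2); rewrite ?e0 ?e1 ?e2 ?inE ?eqxx ?orbT //] ].

Lemma classify (C : {set edge_of adj}) : clique (line_rel adj) C -> C != set0 ->
  [exists v, [forall g in C, v \in val g]] \/
  exists Tr, triangle adj Tr /\ forall g, (g \in C) = (val g \subset Tr).
Proof.
move=> cl /set0Pn [g0 g0C].
have [a [b [hab e0]]] := edge_pair g0.
case: (boolP [forall g in C, a \in val g]) => [ha|/forallPn [g1]].
  by left; apply/existsP; exists a.
rewrite negb_imply => /andP [g1C ag1].
case: (boolP [forall g in C, b \in val g]) => [hb|/forallPn [g2]].
  by left; apply/existsP; exists b.
rewrite negb_imply => /andP [g2C bg2].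
right.
have nab := adj_neq hab.
have n10 : g1 != g0 by apply: contraNneq ag1 => ->; rewrite e0 !inE eqxx.
have [z [zg1 zg0]] := clique_meet cl g1C g0C n10.
have bg1 : b \in val g1.
  move: zg0; rewrite e0 !inE => /orP [] /eqP ez; last by rewrite -ez.
  by rewrite -ez zg1 in ag1.
have [c [hbc e1]] := edge_at bg1.
have nac : a != c by move: ag1; rewrite e1 !inE negb_or => /andP [_].
have n20 : g2 != g0 by apply: contraNneq bg2 => ->; rewrite e0 !inE eqxx orbT.
have [z' [zg2 zg0']] := clique_meet cl g2C g0C n20.
have ag2 : a \in val g2.
  move: zg0'; rewrite e0 !inE => /orP [] /eqP ez; first by rewrite -ez.
  by rewrite -ez zg2 in bg2.
have [d [had e2]] := edge_at ag2.
have nbd : b != d by move: bg2; rewrite e2 !inE negb_or => /andP [_].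
have n12 : g1 != g2 by apply: contraNneq ag1 => ->.
have [w [wg1 wg2]] := clique_meet cl g1C g2C n12.
have ecd : c = d.
  move: wg1 wg2; rewrite e1 e2 !inE => /orP [] /eqP -> /orP [] /eqP // e.
  - by rewrite e eqxx in nab.
  - by rewrite e eqxx in nbd.
  - by rewrite e eqxx in nac.
subst d.
have nbc := adj_neq hbc.
set Tr := [set a; b; c].
have s0 : val g0 \subset Tr by rewrite e0; apply/subsetP => u; rewrite !inE => /orP [] ->; rewrite ?orbT.
have s1 : val g1 \subset Tr by rewrite e1; apply/subsetP => u; rewrite !inE => /orP [] ->; rewrite ?orbT.
have s2 : val g2 \subset Tr by rewrite e2; apply/subsetP => u; rewrite !inE => /orP [] ->; rewrite ?orbT.
have triT : triangle adj Tr.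
  apply/andP; split.
    rewrite /Tr -setUA !cardsU1 cards1 !inE negb_or nab nac nbc; done.
  apply/forallP => x; apply/implyP => hx; apply/forallP => y; apply/implyP => hy.
  apply/implyP => nxy.
  move: hx hy nxy => /in3 [] -> /in3 [] ->;
    rewrite ?eqxx // => _; first [done | by rewrite adj_sym].
exists Tr; split => // g; apply/idP/idP => [gC|sg].
  apply/subsetP => x xg; apply/negPn/negP => xT.
  have [y [_ eg]] := edge_at xg.
  have claim : forall h, h \in C -> val h \subset Tr -> y \in val h.
    move=> h hC sh; case: (eqVneq g h) => [egh|ngh].
      by move: xT; rewrite (subsetP sh) // -egh.
    have [u [ug uh]] := clique_meet cl gC hC ngh.
    move: ug; rewrite eg !inE => /orP [] /eqP eu; last by rewrite -eu.
    by rewrite -eu (subsetP sh) in xT.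
  move: (claim _ g0C s0) (claim _ g1C s1) (claim _ g2C s2).
  rewrite e0 e1 e2 !inE => /orP [] /eqP -> /orP [] /eqP e /orP [] /eqP e';
    move: nab nac nbc; rewrite ?e ?e' ?eqxx //.
have [x [y [hxy eg]]] := edge_pair g.
have nxy := adj_neq hxy.
have xg : x \in val g by rewrite eg !inE eqxx.
have yg : y \in val g by rewrite eg !inE eqxx orbT.
have key : forall h, h \in C -> x \in val h -> y \in val h -> g \in C.
  by move=> h hC xh yh; rewrite (edge_eq nxy xg yg xh yh).
have hx : x \in Tr by rewrite (subsetP sg).
have hy : y \in Tr by rewrite (subsetP sg).
move: hx hy key nxy => /in3 [] -> /in3 [] -> key;
  rewrite ?eqxx // => _; try_key key g0 g1 g2 e0 e1 e2.
Qed.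

Lemma card_edge (g : edge_of adj) : #|val g| = 2.
Proof. by have [x [y [h ->]]] := edge_pair g; rewrite cards2 (adj_neq h). Qed.

Lemma exists_maxm : exists M, maximal_matching adj M.
Proof.
have m0 : matching adj set0 by apply/forallP => a; rewrite inE.
by have [M maxM _] := maxset_exists m0; exists M.
Qed.

Lemma tri_edge Tr x : triangle adj Tr -> x \in Tr ->
  exists g : edge_of adj, x \in val g /\ val g \subset Tr.
Proof.
move=> tT xT; have [y [z [yT zT nyz nyx nzx]]] := tri_pair tT xT.
have h : adj x y by apply: tri_adj tT xT yT _; rewrite eq_sym.
exists (mkE h); split; rewrite /= ?inE ?eqxx //.
by apply/subsetP => u; rewrite !inE => /orP [] /eqP ->.
Qed.

Definition star (v : V) : {set edge_of adj} := [set g : edge_of adj | v \in val g].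
Definition tri (Tr : {set V}) : {set edge_of adj} := [set g : edge_of adj | val g \subset Tr].

Lemma backward (S : {set V}) (TT : {set {set V}}) :
  independent adj S -> (forall v, v \in S -> strong_vertex adj v) ->
  (forall Tr, Tr \in TT -> [/\ triangle adj Tr, strong_triangle adj Tr & Tr :&: S = set0]) ->
  (forall E : edge_of adj, val E :&: S = set0 ->
            #|[set Tr in TT | val E \subset Tr]| = 1) ->
  localizable (line_rel adj).
Proof.
move=> indS stS hTT hdec.
have notS : forall Tr u, Tr \in TT -> u \in Tr -> u \in S -> False.
  move=> Tr u TrT uT uS; have [_ _ e] := hTT _ TrT.
  by have := in_set0 u; rewrite -e inE uT uS.
pose P := [set star v | v in S] :|: [set tri Tr | Tr in TT].
exists P; split.
  apply/and3P; split.
  - apply/eqP/setP => g; rewrite inE; apply/bigcupP.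
    case: (boolP (val g :&: S == set0)) => [h0|/set0Pn [v]].
      have /eqP/cards1P [Tr eTr] := hdec g (eqP h0).
      have : Tr \in [set Tr in TT | val g \subset Tr] by rewrite eTr set11.
      rewrite inE => /andP [TrT sg]; exists (tri Tr); last by rewrite inE.
      by rewrite inE; apply/orP; right; apply/imsetP; exists Tr.
    rewrite inE => /andP [vg vS]; exists (star v); last by rewrite inE.
    by rewrite inE; apply/orP; left; apply/imsetP; exists v.
  - apply/trivIsetP => A B; rewrite !inE.
    move=> /orP [] /imsetP [u uS ->] /orP [] /imsetP [w wS ->] nAB;
      rewrite -setI_eq0; apply/eqP/setP => g; rewrite !inE; apply/negP => /andP [h1 h2].
    + have nuw : u != w by apply: contraNneq nAB => ->.
      have := adj_in nuw h1 h2.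
      by have /forallP /(_ u) /implyP /(_ uS) /forallP /(_ w) /implyP /(_ wS) /negP := indS.
    + exact: (notS w u wS (subsetP h2 _ h1) uS).
    + exact: (notS u w uS (subsetP h1 _ h2) wS).
    + have e0 : val g :&: S = set0.
        apply/setP => z; rewrite !inE; apply/negP => /andP [zg zS].
        exact: (notS u z uS (subsetP h1 _ zg) zS).
      have /eqP/cards1P [T0 eT0] := hdec g e0.
      have : u \in [set Tr in TT | val g \subset Tr] by rewrite inE uS h1.
      have : w \in [set Tr in TT | val g \subset Tr] by rewrite inE wS h2.
      by rewrite eT0 !inE => /eqP ew /eqP eu; rewrite ew eu eqxx in nAB.
  - apply/negP; rewrite !inE => /orP [] /imsetP [u uS] e.
      have [M Mm] := exists_maxm; have [g gM ug] := stS u uS M Mm.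
      have : g \in star u by rewrite inE.
      by rewrite -e inE.
    have [tT _ _] := hTT _ uS.
    have /card_gt0P [x xT] : 0 < #|u| by case/andP: tT => /eqP ->.
    have [g [_ gs]] := tri_edge tT xT.
    have : g \in tri u by rewrite inE.
    by rewrite -e inE.
move=> C; rewrite !inE => /orP [] /imsetP [u uS ->]; split.
- apply/forallP => g; apply/implyP; rewrite inE => ug.
  apply/forallP => h; apply/implyP; rewrite inE => uh; apply/implyP => ngh.
  rewrite /line_rel ngh /=; apply/set0Pn; exists u; by rewrite inE ug uh.
- move=> M; rewrite maxind_eq => /(stS _ uS) [g gM ug]; exists g => //; by rewrite inE.
- apply/forallP => g; apply/implyP; rewrite inE => gs.
  apply/forallP => h; apply/implyP; rewrite inE => hs; apply/implyP => ngh.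
  rewrite /line_rel ngh /=; rewrite -card_gt0.
  have [tT _ _] := hTT _ uS.
  have := cardsUI (val g) (val h); rewrite !card_edge.
  have : #|val g :|: val h| <= 3.
    by case/andP: tT => /eqP <- _; apply: subset_leq_card; rewrite subUset gs hs.
  move=> le3 e4; rewrite -(ltn_add2l #|val g :|: val h|) e4 addn0.
  by apply: leq_ltn_trans le3 _.
- move=> M; rewrite maxind_eq => Mm.
  have [_ st _] := hTT _ uS; have [g gM gs] := st M Mm; exists g => //; by rewrite inE.
Qed.

Lemma tri_det T1 T2 : triangle adj T1 -> triangle adj T2 ->
  (forall g : edge_of adj, (val g \subset T1) = (val g \subset T2)) -> T1 = T2.
Proof.
move=> t1 t2 h; apply/setP => x; apply/idP/idP => xT.
  by have [g [xg gs]] := tri_edge t1 xT; rewrite h in gs; rewrite (subsetP gs).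
by have [g [xg gs]] := tri_edge t2 xT; rewrite -h in gs; rewrite (subsetP gs).
Qed.

Lemma forward : localizable (line_rel adj) ->
  exists (S : {set V}) (TT : {set {set V}}),
    [/\ independent adj S,
        (forall v, v \in S -> strong_vertex adj v),
        (forall Tr, Tr \in TT ->
            [/\ triangle adj Tr, strong_triangle adj Tr & Tr :&: S = set0]) &
        (forall E : edge_of adj, val E :&: S = set0 ->
            #|[set Tr in TT | val E \subset Tr]| = 1)].
Proof.
move=> [P [/and3P [/eqP cov triv n0] stP]].
have same : forall B1 B2 g, B1 \in P -> B2 \in P -> g \in B1 -> g \in B2 -> B1 = B2.
  by move=> B1 B2 g h1 h2 g1 g2; rewrite -(def_pblock triv h1 g1) (def_pblock triv h2 g2).
have inP : forall g, exists2 B, B \in P & g \in B.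
  move=> g; have : g \in cover P by rewrite cov inE.
  by move=> /bigcupP [B BP gB]; exists B.
pose center (B : {set edge_of adj}) := [pick v | [forall g in B, v \in val g]].
have centerP : forall B v, center B = Some v -> forall g, g \in B -> v \in val g.
  move=> B v; rewrite /center; case: pickP => // w /forallP hw [<-] g gB.
  by have /implyP := hw g; apply.
pose S := [set v | [exists B in P, center B == Some v]].
pose TT := [set Tr | triangle adj Tr &&
   [exists B in P, [forall g, (g \in B) == (val g \subset Tr)]]].
have starkey : forall B v (f : edge_of adj), B \in P -> center B = Some v ->
    v \in val f -> f \notin B -> False.
  move=> B v f BP cB vf fB; apply: (keyL (stP _ BP) fB) => g gB.
  by exists v; split => //; apply: centerP cB _ gB.
exists S, TT; split.
- apply/forallP => u; apply/implyP; rewrite inE => /existsP [B1 /andP [B1P /eqP c1]].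
  apply/forallP => w; apply/implyP; rewrite inE => /existsP [B2 /andP [B2P /eqP c2]].
  apply/negP => huw; pose f := mkE huw.
  have uf : u \in val f by rewrite /= !inE eqxx.
  have wf : w \in val f by rewrite /= !inE eqxx orbT.
  case: (boolP (f \in B2)) => fB2; last exact: starkey B2P c2 wf fB2.
  case: (boolP (f \in B1)) => fB1; last exact: starkey B1P c1 uf fB1.
  have e12 := same _ _ _ B1P B2P fB1 fB2; rewrite e12 c2 in c1; case: c1 => ewu.
  have h2 := huw; subst; by rewrite adj_irr in h2.
- move=> v; rewrite inE => /existsP [B /andP [BP /eqP cB]] M.
  rewrite -maxind_eq => Mm; have [_ st] := stP _ BP; have [g gB gM] := st M Mm.
  by exists g => //; apply: centerP cB _ gB.
- move=> Tr; rewrite inE => /andP [tT /existsP [B /andP [BP /forallP chB]]].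
  have ch : forall g, (g \in B) = (val g \subset Tr) by move=> g; apply/eqP.
  split => //.
    move=> M Mm; have [_ st] := stP _ BP; have [g gB gM] := st M (etrans (maxind_eq M) Mm).
    by exists g => //; rewrite -ch.
  apply/setP => v; rewrite !inE; apply/negP => /andP [vT].
  move=> /existsP [B1 /andP [B1P /eqP c1]].
  have [y [z [yT zT nyz nyv nzv]]] := tri_pair tT vT.
  have hyz : adj y z by apply: tri_adj tT yT zT nyz.
  have hvy : adj v y by apply: tri_adj tT vT yT _; rewrite eq_sym.
  pose f := mkE hyz; pose h := mkE hvy.
  have fB : f \in B by rewrite ch; apply/subsetP => u; rewrite /= !inE => /orP [] /eqP ->.
  have hB : h \in B by rewrite ch; apply/subsetP => u; rewrite /= !inE => /orP [] /eqP ->.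
  case: (eqVneq B1 B) => [e1|n1].
    have := centerP _ _ c1 f; rewrite e1 fB /= !inE => /(_ isT) /orP [] /eqP ev.
      by rewrite ev eqxx in nyv.
    by rewrite ev eqxx in nzv.
  apply: (starkey _ _ h B1P c1); first by rewrite /= !inE eqxx.
  apply/negP => hB1; have := same _ _ _ B1P BP hB1 hB.
  by move/eqP; rewrite (negbTE n1).
move=> E E0.
have [B BP EB] := inP E.
case cB: (center B) => [v|].
  have vE := centerP _ _ cB _ EB.
  have vS : v \in S by rewrite inE; apply/existsP; exists B; rewrite BP cB eqxx.
  by have := in_set0 v; rewrite -E0 inE vE vS.
have [cl _] := stP _ BP.
have nB : B != set0 by apply: contraNneq n0 => <-.
case: (classify cl nB) => [/existsP [v hv]|[Tr [tT ch]]].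
  by move: cB; rewrite /center; case: pickP => // /(_ v); rewrite hv.
have TrT : Tr \in TT.
  rewrite inE tT /=; apply/existsP; exists B; rewrite BP /=; apply/forallP => g.
  by rewrite ch.
rewrite (_ : [set Tr0 in TT | val E \subset Tr0] = [set Tr]) ?cards1 //.
apply/setP => Tr0; rewrite in_set in_set1; apply/andP/eqP => [[]|->]; last by rewrite TrT -ch.
rewrite inE => /andP [t0 /existsP [B0 /andP [B0P /forallP ch0]]] sE.
have ch0' : forall g, (g \in B0) = (val g \subset Tr0) by move=> g; apply/eqP.
have EB0 : E \in B0 by rewrite ch0'.
have eB := same _ _ _ BP B0P EB EB0; subst B0.
by apply: tri_det t0 tT _ => g; rewrite -ch0' ch.
Qed.
End Aux.

Theorem mainTheorem14 (V : finType) (adj : rel V)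
  (adj_sym : symmetric adj) (adj_irr : irreflexive adj) :
  localizable (line_rel adj) <->
  exists (S : {set V}) (TT : {set {set V}}),
    [/\ independent adj S,
        (forall v, v \in S -> strong_vertex adj v),
        (forall Tr, Tr \in TT ->
            [/\ triangle adj Tr, strong_triangle adj Tr & Tr :&: S = set0]) &
        (forall E : edge_of adj, val E :&: S = set0 ->
            #|[set Tr in TT | val E \subset Tr]| = 1)].
Proof.
split; first exact: forward.
by move=> [S [TT [h1 h2 h3 h4]]]; apply: (backward adj_sym adj_irr h1 h2 h3 h4).
Qed.
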